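(* Let $k\ge3$ and let $G,H$ be $2$-connected graphs. Let $u,v\in V(G)$ and $u',v'\in V(H)$ be such that $G-\{u,v\}$ is disconnected and $H-\{u',v'\}$ is connected. Then $\chi^k_G(u,v)\ne\chi^k_H(u',v')$.
   Context: Graphs are finite, simple, undirected (possibly colored). A graph is $2$-connected if it has more than $2$ vertices and removing any one vertex leaves it connected. For $k\ge2$, the $k$-dimensional Weisfeiler–Leman algorithm computes a coloring of $V(G)^k$: the initial color of a tuple consists of its input color and the isomorphism type of the ordered induced subgraph on its entries; in each round the new color of $\bar v$ is the pair of its old color and the multiset, over $w\in V(G)$, of the $k$-tuples whose $i$-th component is the old color of $\bar v$ with its $i$-th entry replaced by $w$; the stable coloring is $\chi^k_G$, with canonical colors comparable across graphs. For $\ell<k$, $\chi^k_G(u_1,\dots,u_\ell):=\chi^k_G(u_1,\dots,u_\ell,u_\ell,\dots,u_\ell)$. *)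

(* Defs.v *)
From mathcomp Require Import all_boot.
Set Implicit Arguments. Unset Strict Implicit. Unset Printing Implicit Defensive.

Record graph := Graph {
  vert : finType;
  adj : rel vert;
  gcol : vert -> nat;
  adj_sym : symmetric adj;
  adj_irr : irreflexive adj }.

(* The subgraph induced on S is connected (the empty graph counts as connected;
   "disconnected" = not connected, which then forces at least two vertices). *)
Definition connected_on (G : graph) (S : {set vert G}) : Prop :=
  forall a b, a \in S -> b \in S ->
    connect [rel x y | [&& adj x y, x \in S & y \in S]] a b.

Definition connected_minus (G : graph) (X : {set vert G}) : Prop :=
  connected_on (~: X).

Definition two_connected (G : graph) : Prop :=
  2 < #|vert G| /\ forall x : vert G, connected_minus [set x].

Definition wlcolor := GenTree.tree nat.

(* canonical ordering used to represent multisets as sorted lists *)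
Definition col_le : rel wlcolor := fun a b => pickle a <= pickle b.
Definition mset (s : seq wlcolor) : wlcolor := GenTree.Node 4 (sort col_le s).

Definition ktuple (G : graph) (k : nat) := 'I_k -> vert G.

Definition upd (G : graph) k (t : ktuple G k) (i : 'I_k) (w : vert G) : ktuple G k :=
  fun j => if j == i then w else t j.

(* initial color: input colors of the entries, plus the isomorphism type of
   the ordered induced subgraph (equality and adjacency pattern) *)
Definition wl_init (G : graph) k (t : ktuple G k) : wlcolor :=
  GenTree.Node 0
    [:: GenTree.Node 1 [seq GenTree.Leaf (gcol (t i)) | i <- enum 'I_k];
        GenTree.Node 2 [seq GenTree.Leaf ((t i == t j) + 2 * adj (t i) (t j))
                       | i <- enum 'I_k, j <- enum 'I_k]].

Fixpoint wl (G : graph) k (n : nat) (t : ktuple G k) : wlcolor :=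
  match n with
  | 0 => wl_init t
  | n'.+1 =>
      GenTree.Node 3
        [:: wl n' t;
            mset [seq GenTree.Node 5 [seq wl n' (upd t i w) | i <- enum 'I_k]
                 | w <- enum (vert G)]]
  end.

(* chi^k_G(t) = chi^k_H(t'): the stable colors coincide, i.e. the colors
   agree after every number of rounds. *)
Definition same_stable_color (G H : graph) k (t : ktuple G k) (t' : ktuple H k) : Prop :=
  forall n, wl n t = wl n t'.

Definition pad2 (G : graph) k (u v : vert G) : ktuple G k :=
  fun j => if val j == 0 then u else v.
Arguments pad2 {G} k u v.

(* Main.v *)
Require Import Defs.
From mathcomp Require Import all_boot.
Set Implicit Arguments. Unset Strict Implicit. Unset Printing Implicit Defensive.

Section Basic.
Variables (G H : graph) (k : nat).

Lemma wl_down n (t : ktuple G k) (t' : ktuple H k) :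
  wl n.+1 t = wl n.+1 t' -> wl n t = wl n t'.
Proof. by case. Qed.

Lemma wl_le m n (t : ktuple G k) (t' : ktuple H k) :
  m <= n -> wl n t = wl n t' -> wl m t = wl m t'.
Proof.
elim: n => [|n IH]; first by rewrite leqn0 => /eqP ->.
rewrite leq_eqVlt => /orP [/eqP -> //| Hm] E.
by apply: IH => //; apply: wl_down.
Qed.

Lemma allpairs_eq (A B : eqType) (C : Type) (f g : A -> B -> C) (s : seq A) (r : seq B) :
  [seq f i j | i <- s, j <- r] = [seq g i j | i <- s, j <- r] ->
  forall i j, i \in s -> j \in r -> f i j = g i j.
Proof.
elim: s => [//|a s IH] /=.
move=> E.
have Hs : size [seq f a j | j <- r] = size [seq g a j | j <- r] by rewrite !size_map.
have [E1 E2] : [seq f a j | j <- r] = [seq g a j | j <- r] /\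
   [seq f i j | i <- s, j <- r] = [seq g i j | i <- s, j <- r].
  move: E Hs; elim: [seq f a j | j <- r] [seq g a j | j <- r] => [|x l IHl] [|y l'] //=.
  by case=> -> /IHl H1 [] /H1 [-> ->].
move=> i j; rewrite inE => /orP [/eqP ->|Hi] Hj; last exact: IH.
by move/eq_in_map: E1; apply.
Qed.

Lemma init_bits (t : ktuple G k) (t' : ktuple H k) :
  wl 0 t = wl 0 t' -> forall i j,
  (t i == t j) = (t' i == t' j) /\ adj (t i) (t j) = adj (t' i) (t' j).
Proof.
case=> _ E i j.
have := allpairs_eq E (mem_enum _ i) (mem_enum _ j).
case; case: (t i == t j); case: (t' i == t' j);
  case: (adj (t i) (t j)); case: (adj (t' i) (t' j)) => //.
Qed.

Lemma init_eq n (t : ktuple G k) (t' : ktuple H k) :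
  wl n t = wl n t' -> forall i j,
  (t i == t j) = (t' i == t' j) /\ adj (t i) (t j) = adj (t' i) (t' j).
Proof. by move=> E; apply: init_bits; apply: (wl_le (leq0n n)). Qed.

End Basic.

Lemma perm_match (A B C : eqType) (F : A -> C) (F' : B -> C) (b0 : B) (s : seq A) (r : seq B) :
  uniq s -> uniq r -> perm_eq (map F s) (map F' r) ->
  exists h : A -> B, {in s &, injective h} /\ {in s, forall a, h a \in r /\ F a = F' (h a)}.
Proof.
elim: s r => [|a s IH] r.
  by move=> _ _ _; exists (fun _ => b0); split.
rewrite cons_uniq => /andP [nas us] ur /= P.
have : F a \in map F' r by rewrite -(perm_mem P) inE eqxx.
case/mapP => b br Eb.
have P2 : perm_eq (map F s) (map F' (rem b r)).
  have P3 := perm_map F' (perm_to_rem br).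
  rewrite -(perm_cons (F a)); apply: (perm_trans P); rewrite (perm_trans P3) //= Eb.
  done.
have [h' [hi hr]] := IH _ us (rem_uniq b ur) P2.
exists (fun z => if z == a then b else h' z); split.
  move=> x y; rewrite !inE => /orP [/eqP ->|xs] /orP [/eqP ->|ys] //=; rewrite ?eqxx.
  - have [ys' _] := hr y ys; case: eqP => [->//|_] E.
    by move: ys'; rewrite -E mem_rem_uniqF.
  - have [xs' _] := hr x xs; case: eqP => [->//|_] E.
    by move: xs'; rewrite E mem_rem_uniqF.
  - have xa : x != a by apply: contraNneq nas => <-.
    have ya : y != a by apply: contraNneq nas => <-.
    rewrite (negbTE xa) (negbTE ya); exact: hi.
move=> x; rewrite inE => /orP [/eqP ->|xs]; first by rewrite eqxx.
case: eqP => [Ex|_]; first by move: nas; rewrite -Ex xs.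
have [xr E] := hr x xs; split => //.
exact: (mem_rem xr).
Qed.

Lemma perm_bij (A B : finType) (C : eqType) (F : A -> C) (F' : B -> C) (b0 : B) :
  perm_eq (map F (enum A)) (map F' (enum B)) ->
  exists h : A -> B, bijective h /\ forall a, F a = F' (h a).
Proof.
move=> P.
have [h [hi hr]] := perm_match b0 (enum_uniq A) (enum_uniq B) P.
exists h; split; last by move=> a; case: (hr a (mem_enum _ a)).
apply: inj_card_bij.
  by move=> x y; apply: hi; rewrite mem_enum.
have := perm_size P; rewrite !size_map.
rewrite !cardT !enumT => ->; exact: leqnn.
Qed.

Lemma wl_step (G H : graph) k n (t : ktuple G k) (t' : ktuple H k) (b0 : vert H) :
  wl n.+1 t = wl n.+1 t' ->
  exists h : vert G -> vert H, bijective h /\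
    forall i w, wl n (upd t i w) = wl n (upd t' i (h w)).
Proof.
case=> _ E2.
set F := fun w : vert G => GenTree.Node 5 [seq wl n (upd t i w) | i <- enum 'I_k].
set F' := fun w : vert H => GenTree.Node 5 [seq wl n (upd t' i w) | i <- enum 'I_k].
have P : perm_eq (map F (enum (vert G))) (map F' (enum (vert H))).
  by rewrite -(perm_sort col_le) E2 perm_sort.
have [h [hb hF]] := perm_bij b0 P.
exists h; split => // i w.
have := hF w; rewrite /F /F'; case=> /eq_in_map; apply; exact: mem_enum.
Qed.

Fixpoint W (G : graph) (S : {set vert G}) (x y : vert G) (l : nat) : nat :=
  if l is l'.+1 then (y \notin S) * \sum_(z : vert G) adj z y * W S x z l'
  else (x == y).

Lemma upd_same (G : graph) k (t : ktuple G k) i w : upd t i w i = w.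
Proof. by rewrite /upd eqxx. Qed.
Lemma upd_other (G : graph) k (t : ktuple G k) i j w : j != i -> upd t i w j = t j.
Proof. by rewrite /upd => /negbTE ->. Qed.

Lemma W_inv (G H : graph) k l n (t : ktuple G k) (t' : ktuple H k) (a b p : 'I_k) :
  b != a -> b != p -> l <= n -> wl n t = wl n t' ->
  W [set t p] (t a) (t b) l = W [set t' p] (t' a) (t' b) l.
Proof.
move=> ba bp.
have ab : a != b by rewrite eq_sym.
have pb : p != b by rewrite eq_sym.
elim: l n t t' => [|l IH] n t t' ln E.
  by rewrite /=; have [-> _] := init_eq E a b.
case: n ln E => // n ln E.
have [h [hb hE]] := wl_step (t' a) E.
rewrite /= !in_set1; have [-> _] := init_eq E b p; congr (_ * _).
transitivity (\sum_z adj (h z) (t' b) * W [set t' p] (t' a) (h z) l).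
  apply: eq_bigr => z _.
  have [_ ad] := init_eq (hE a z) a b.
  rewrite !upd_same !(upd_other _ _ ba) in ad; rewrite ad.
  have := IH n (upd t b z) (upd t' b (h z)) ln (hE b z).
  by rewrite !upd_same !(upd_other _ _ ab) !(upd_other _ _ pb) => ->.
by rewrite (reindex h) //; exact: onW_bij.
Qed.

Section Ident.
Variables (G : graph) (u x : vert G) (S : {set vert G}).
Hypothesis uS : u \notin S.
Let T := u |: S.
Definition Fh j := \sum_(z : vert G) adj z u * W T x z j.

Lemma W_decomp l y :
  W S x y l = W T x y l + \sum_(j < l) Fh j * W S u y (l - j.+1).
Proof.
elim: l y => [|l IH] y; first by rewrite /= big_ord0 addn0.
rewrite [LHS]/=.
have -> : \sum_z adj z y * W S x z l =
  \sum_z adj z y * W T x z l +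
  \sum_(j < l) Fh j * \sum_z adj z y * W S u z (l - j.+1).
  rewrite (eq_bigr (fun z => adj z y * W T x z l +
      \sum_(j < l) Fh j * (adj z y * W S u z (l - j.+1)))); last first.
    move=> z _; rewrite IH mulnDr big_distrr /=; congr (_ + _).
    by apply: eq_bigr => j _; rewrite mulnCA.
  rewrite big_split /=; congr (_ + _).
  rewrite exchange_big /=; apply: eq_bigr => j _.
  by rewrite big_distrr.
rewrite big_ord_recr /= subnn mulnDr addnCA [LHS]addnC; congr (_ + _).
  rewrite big_distrr /=; apply: eq_bigr => j _.
  rewrite mulnCA; congr (_ * _).
  have jl : j < l := ltn_ord j.
  by rewrite subSS -(subnSK jl) /=.
rewrite /Fh /T in_setU1.
have [->|yu] := eqVneq y u.
  by rewrite (negbTE uS) /= eqxx mul0n add0n mul1n muln1.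
by rewrite /= (eq_sym u y) (negbTE yu) muln0 addn0.
Qed.

Lemma W_T_u l : x != u -> W T x u l = 0.
Proof.
by case: l => [|l] /= xu; [rewrite (negbTE xu) | rewrite /T setU11].
Qed.

End Ident.

Section Conn.
Variables (G : graph) (T : {set vert G}) (x : vert G).
Hypothesis xT : x \notin T.
Let e := [rel a b | [&& adj a b, a \in ~: T & b \in ~: T]].

Lemma W_notin y l : 0 < W T x y l -> y \notin T.
Proof.
case: l => [|l] /=; first by rewrite lt0b => /eqP <-.
by case: (y \in T).
Qed.

Lemma W_conn y l : 0 < W T x y l -> connect e x y.
Proof.
elim: l y => [|l IH] y; first by rewrite /= lt0b => /eqP <-; exact: connect0.
rewrite /= muln_gt0 => /andP [yT].
rewrite lt0n sum_nat_eq0 => /forallPn [z /=].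
rewrite -lt0n muln_gt0 => /andP [azy Wz].
apply: (connect_trans (IH _ Wz)); apply: connect1.
by move: yT azy; rewrite !lt0b /= !in_setC (W_notin Wz) => -> ->.
Qed.

Lemma path_W p : path e x p -> 0 < W T x (last x p) (size p).
Proof.
elim/last_ind: p => [|p y IH]; first by rewrite /= eqxx.
rewrite rcons_path => /andP [pth ed].
rewrite last_rcons size_rcons /=.
move: ed => /= /and3P [ad _]; rewrite in_setC => yT.
rewrite yT mul1n (bigD1 (last x p)) //= ad mul1n.
exact: (leq_trans (IH pth) (leq_addr _ _)).
Qed.

Lemma conn_W y : connect e x y -> exists2 l, l < #|vert G| & 0 < W T x y l.
Proof.
case/connectP => p pth ->.
case: (shortenP pth) => p' pth' up' _.
exists (size p'); last exact: path_W.
have := uniq_leq_size up' (s2 := enum (vert G)) (fun z _ => mem_enum _ z).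
by rewrite -cardT.
Qed.
End Conn.

Lemma W0 (G : graph) (S : {set vert G}) x : W S x x 0 = 1.
Proof. by rewrite /= eqxx. Qed.

Lemma key (G H : graph) k (t : ktuple G k) (t' : ktuple H k) (p0 p1 p2 : 'I_k) N
  (h : vert G -> vert H) :
  p0 != p1 -> p0 != p2 -> p1 != p2 ->
  wl N t = wl N t' ->
  (forall i w, wl N (upd t i w) = wl N (upd t' i (h w))) ->
  t p0 != t p1 -> t' p0 != t' p1 -> t p2 != t p0 -> t' p2 != t' p0 ->
  forall y l, l <= N ->
  W [set t p0; t p1] (t p2) y l = W [set t' p0; t' p1] (t' p2) (h y) l.
Proof.
move=> d01 d02 d12 Et hE uv uv' au au' y l lN.
have d10 : p1 != p0 by rewrite eq_sym.
have d20 : p2 != p0 by rewrite eq_sym.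
have d21 : p2 != p1 by rewrite eq_sym.
have uS : t p0 \notin [set t p1] by rewrite in_set1.
have uS' : t' p0 \notin [set t' p1] by rewrite in_set1.
have Wuy : forall y m, m <= N ->
    W [set t p1] (t p0) y m = W [set t' p1] (t' p0) (h y) m.
  move=> z m mN.
  have := W_inv d20 d21 mN (hE p2 z).
  by rewrite !upd_same !(upd_other _ _ d02) !(upd_other _ _ d12).
have hu : h (t p0) = t' p0.
  have [e _] := init_eq (hE p2 (t p0)) p2 p0.
  move: e; rewrite upd_same !(upd_other _ _ d02) eqxx.
  by rewrite upd_same => /esym/eqP.
have Wuu : forall m, m <= N ->
    W [set t p1] (t p0) (t p0) m = W [set t' p1] (t' p0) (t' p0) m.
  by move=> m mN; rewrite Wuy // hu.
have Wau : forall m, m <= N ->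
    W [set t p1] (t p2) (t p0) m = W [set t' p1] (t' p2) (t' p0) m.
  by move=> m mN; exact: (W_inv d02 d01 mN Et).
have Way : forall m, m <= N ->
    W [set t p1] (t p2) y m = W [set t' p1] (t' p2) (h y) m.
  move=> m mN.
  have := W_inv d02 d01 mN (hE p0 y).
  by rewrite !upd_same !(upd_other _ _ d20) !(upd_other _ _ d10).
have HF : forall m, m <= N -> forall j, j < m ->
    Fh (t p0) (t p2) [set t p1] j = Fh (t' p0) (t' p2) [set t' p1] j.
  elim=> [|m IH] mN j; first by rewrite ltn0.
  rewrite ltnS leq_eqVlt => /orP [/eqP ->|jm]; last first.
    by apply: IH => //; apply: ltnW.
  have E1 := W_decomp (t p2) uS m.+1 (t p0).
  have E2 := W_decomp (t' p2) uS' m.+1 (t' p0).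
  rewrite W_T_u // add0n big_ord_recr subnn W0 muln1 in E1.
  rewrite W_T_u // add0n big_ord_recr subnn W0 muln1 in E2.
  rewrite Wau // in E1; rewrite E1 in E2.
  have ES : \sum_(i < m) Fh (t p0) (t p2) [set t p1] i * W [set t p1] (t p0) (t p0) (m.+1 - i.+1) =
            \sum_(i < m) Fh (t' p0) (t' p2) [set t' p1] i * W [set t' p1] (t' p0) (t' p0) (m.+1 - i.+1).
    apply: eq_bigr => i _; rewrite IH ?(ltnW mN) // Wuu //.
    by rewrite subSS; apply: (leq_trans (leq_subr _ _)); apply: ltnW.
  by rewrite ES in E2; move/addnI: E2.
have E1 := W_decomp (t p2) uS l y.
have E2 := W_decomp (t' p2) uS' l (h y).
rewrite Way // in E1; rewrite E1 in E2.
apply/esym; apply: (@addIn (\sum_(j < l) Fh (t p0) (t p2) [set t p1] j * W [set t p1] (t p0) y (l - j.+1))).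
rewrite E2; congr (_ + _); apply: eq_bigr => j _.
rewrite (HF l) // Wuy //.
exact: (leq_trans (leq_subr _ _) lN).
Qed.

Unset Implicit Arguments.
Theorem corollary14 (k : nat) (G H : graph) (u v : vert G) (u' v' : vert H) :
  3 <= k ->
  two_connected G -> two_connected H ->
  ~ connected_minus [set u; v] ->
  connected_minus [set u'; v'] ->
  ~ same_stable_color (pad2 k u v) (pad2 k u' v').
Proof.
move=> k3 [_ G2] _ nG cH E.
have k0 : 0 < k by apply: leq_trans k3.
have k1 : 1 < k by apply: leq_trans k3.
have k2 : 2 < k by [].
pose p0 := Ordinal k0; pose p1 := Ordinal k1; pose p2 := Ordinal k2.
have d01 : p0 != p1 by [].
have d02 : p0 != p2 by [].
have d12 : p1 != p2 by [].
have d20 : p2 != p0 by [].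
have d21 : p2 != p1 by [].
have uv : u != v.
  apply/eqP => Euv; apply: nG; rewrite Euv setUid; exact: G2.
set S := ~: [set u; v].
have : ~~ [forall a, [forall b, (a \in S) ==> (b \in S) ==>
          connect [rel x y | [&& adj x y, x \in S & y \in S]] a b]].
  apply/negP => /forallP HH; apply: nG => a b Ha Hb.
  by move: (HH a) => /forallP /(_ b); rewrite Ha Hb.
case/forallPn => a /forallPn [b]; rewrite !negb_imply => /and3P [Ha Hb nc].
set N := #|vert H|.
have [h0 [_ h0E]] := wl_step u' (E N.+2).
set t := upd (pad2 k u v) p2 a.
set t' := upd (pad2 k u' v') p2 (h0 a).
have Et : wl N.+1 t = wl N.+1 t' by exact: h0E.
have [h [_ hE]] := wl_step u' Et.
have tp0 : t p0 = u by rewrite /t upd_other.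
have tp1 : t p1 = v by rewrite /t upd_other.
have tp2 : t p2 = a by rewrite /t upd_same.
have tp0' : t' p0 = u' by rewrite /t' upd_other.
have tp1' : t' p1 = v' by rewrite /t' upd_other.
have tp2' : t' p2 = h0 a by rewrite /t' upd_same.
have uv' : u' != v'.
  have [e _] := init_eq (E 0) p0 p1.
  by move: uv; rewrite /pad2 /= in e; rewrite e.
have [e20 _] := init_eq Et p2 p0.
have [e21 _] := init_eq Et p2 p1.
rewrite tp0 tp1 tp2 tp0' tp1' tp2' in e20 e21.
move: Ha; rewrite /S in_setC !inE negb_or => /andP [au av].
have au' : h0 a != u' by rewrite -e20.
have av' : h0 a != v' by rewrite -e21.
move: Hb; rewrite /S in_setC !inE negb_or => /andP [bu bv].
have [f20 _] := init_eq (hE p2 b) p2 p0.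
have [f21 _] := init_eq (hE p2 b) p2 p1.
rewrite !upd_same !(upd_other _ _ d02) !(upd_other _ _ d12) tp0 tp1 tp0' tp1' in f20 f21.
have bu' : h b != u' by rewrite -f20.
have bv' : h b != v' by rewrite -f21.
have xT' : h0 a \in ~: [set u'; v'] by rewrite in_setC !inE negb_or au' av'.
have bT' : h b \in ~: [set u'; v'] by rewrite in_setC !inE negb_or bu' bv'.
have := cH _ _ xT' bT'.
move/(conn_W (T := [set u'; v'])).
have xT'' : h0 a \notin [set u'; v'] by rewrite !inE negb_or au' av'.
case=> l lN Wl.
have Ekey := key d01 d02 d12 (wl_down Et) hE.
rewrite tp0 tp1 tp2 tp0' tp1' tp2' in Ekey.
have := Ekey uv uv' au au' b l (ltnW lN).
move=> EW; rewrite -EW in Wl.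
have aT : a \notin [set u; v] by rewrite !inE negb_or au av.
move/negP: nc; apply.
have := W_conn aT (y := b) (l := l).
rewrite /S; apply.
by rewrite Wl.
Qed.
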